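(* Let $R\in\mathbb{R}^{m\times N}$, $\lambda\ge 0$, and let $\sigma_1$ be the largest singular value of $R$, with corresponding left singular vector $u^1\in\mathbb{R}^m$ and right singular vector $v_1\in\mathbb{R}^{N}$ (unit vectors with $R v_1=\sigma_1 u^1$). Consider the problem $$\min_{d\in\mathbb{R}^m,\ \|d\|_2=1,\ x\in\mathbb{R}^{1\times N}}\ \frac12\|d\,x-R\|_F^2+\lambda\|x\|_2 .$$ If $\sigma_1\ge\lambda$, then $(d,x)=(u^1,(\sigma_1-\lambda)v_1^T)$ is a minimizer. Otherwise (if $\sigma_1<\lambda$), for any $d_0\in\mathbb{R}^m$ with $\|d_0\|_2=1$, the pair $(d_0,0)$ is a minimizer; in particular the optimal row $x$ is zero.
   Context: This is the per-atom update of a K-SVD-type dictionary learning scheme with the row-sparsity ($\ell_{2,1}$) penalty $\lambda\sum_j\|x_j\|_2$, where $R$ is the residual after removing the contribution of the current atom; in the paper $d_0$ is the current (previous) atom. *)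

(* Defs.v *)
From mathcomp Require Import all_boot all_order all_algebra.
From mathcomp Require Import reals.
Set Implicit Arguments. Unset Strict Implicit. Unset Printing Implicit Defensive.
Import Order.TTheory GRing.Theory Num.Theory.
Local Open Scope ring_scope.

Definition frob2 (R : realType) (m n : nat) (A : 'M[R]_(m, n)) : R :=
  \sum_i \sum_j A i j ^+ 2.

Definition norm2 (R : realType) (m n : nat) (A : 'M[R]_(m, n)) : R :=
  Num.sqrt (frob2 A).

Definition singular_triple (R : realType) (m n : nat) (A : 'M[R]_(m, n))
  (s : R) (u : 'cV[R]_m) (v : 'cV[R]_n) : Prop :=
  0 <= s /\ norm2 u = 1 /\ norm2 v = 1 /\ A *m v = s *: u /\ A^T *m u = s *: v.

Definition singular_value (R : realType) (m n : nat) (A : 'M[R]_(m, n)) (s : R) : Prop :=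
  exists u v, singular_triple A s u v.

Definition obj (R : realType) (m n : nat) (Rm : 'M[R]_(m, n)) (lam : R)
  (d : 'cV[R]_m) (x : 'rV[R]_n) : R :=
  frob2 (d *m x - Rm) / 2 + lam * norm2 x.

Definition is_minimizer (R : realType) (m n : nat) (Rm : 'M[R]_(m, n)) (lam : R)
  (d : 'cV[R]_m) (x : 'rV[R]_n) : Prop :=
  norm2 d = 1 /\
  forall (d' : 'cV[R]_m) (x' : 'rV[R]_n), norm2 d' = 1 -> obj Rm lam d x <= obj Rm lam d' x'.

(* Main.v *)
Require Import Defs.
From mathcomp Require Import all_boot all_order all_algebra.
From mathcomp Require Import reals.
From mathcomp Require Import all_classical all_reals all_analysis.
From mathcomp Require Import ring lra.
Import Order.TTheory GRing.Theory Num.Theory.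
Import numFieldNormedType.Exports.
Local Open Scope ring_scope.
Set Implicit Arguments. Unset Strict Implicit. Unset Printing Implicit Defensive.

Section Alg.

Variable R : realType.

Definition ip p q (A B : 'M[R]_(p, q)) : R := \sum_i \sum_j A i j * B i j.

Lemma frob2_ip p q (A : 'M[R]_(p, q)) : frob2 A = ip A A.
Proof. by rewrite /frob2 /ip; apply: eq_bigr => i _; apply: eq_bigr => j _; rewrite expr2. Qed.

Lemma ipC p q (A B : 'M[R]_(p, q)) : ip A B = ip B A.
Proof. by rewrite /ip; apply: eq_bigr => i _; apply: eq_bigr => j _; rewrite mulrC. Qed.

Lemma ipDl p q (A B C : 'M[R]_(p, q)) : ip (A + B) C = ip A C + ip B C.
Proof.
rewrite /ip -big_split; apply: eq_bigr => i _; rewrite -big_split.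
by apply: eq_bigr => j _; rewrite !mxE mulrDl.
Qed.

Lemma ipZl p q k (A B : 'M[R]_(p, q)) : ip (k *: A) B = k * ip A B.
Proof.
rewrite /ip mulr_sumr; apply: eq_bigr => i _; rewrite mulr_sumr.
by apply: eq_bigr => j _; rewrite !mxE mulrA.
Qed.

Lemma ip0l p q (B : 'M[R]_(p, q)) : ip 0 B = 0.
Proof. by rewrite -(scale0r 0) ipZl mul0r. Qed.

Lemma frob2DZ p q (X Y : 'M[R]_(p, q)) t :
  frob2 (X + t *: Y) = frob2 X + 2 * t * ip X Y + t ^+ 2 * frob2 Y.
Proof.
rewrite !frob2_ip ipDl ipZl (ipC X (X + _)) (ipC Y (X + _)) !ipDl !ipZl (ipC Y X).
ring.
Qed.

Lemma frob2Z p q k (A : 'M[R]_(p, q)) : frob2 (k *: A) = k ^+ 2 * frob2 A.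
Proof. by rewrite !frob2_ip ipZl ipC ipZl; ring. Qed.

Lemma ip_mull p q r (A : 'M[R]_(p, q)) (B : 'M[R]_(q, r)) (C : 'M[R]_(p, r)) :
  ip (A *m B) C = ip A (C *m B^T).
Proof.
rewrite /ip; apply: eq_bigr => i _.
under eq_bigr => j _ do rewrite mxE big_distrl /=.
rewrite exchange_big; apply: eq_bigr => k _; rewrite mxE big_distrr.
by apply: eq_bigr => j _; rewrite !mxE /=; ring.
Qed.

Lemma ip_tr p q (A B : 'M[R]_(p, q)) : ip A^T B^T = ip A B.
Proof.
rewrite /ip exchange_big; apply: eq_bigr => i _; apply: eq_bigr => j _.
by rewrite !mxE.
Qed.

Lemma frob2_tr p q (A : 'M[R]_(p, q)) : frob2 A^T = frob2 A.
Proof. by rewrite !frob2_ip ip_tr. Qed.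

Lemma frob2_ge0 p q (A : 'M[R]_(p, q)) : 0 <= frob2 A.
Proof. by apply: sumr_ge0 => i _; apply: sumr_ge0 => j _; exact: sqr_ge0. Qed.

Lemma frob2_eq0 p q (A : 'M[R]_(p, q)) : frob2 A = 0 -> A = 0.
Proof.
move=> H; apply/matrixP => i j; rewrite mxE.
have Hi := psumr_eq0P (fun i _ => sumr_ge0 _ (fun j _ => sqr_ge0 (A i j))) H (i:=i) isT.
have Hj := psumr_eq0P (fun j _ => sqr_ge0 (A i j)) Hi (i:=j) isT.
by apply/eqP; rewrite -sqrf_eq0 Hj.
Qed.

Lemma frob20 p q : frob2 (0 : 'M[R]_(p, q)) = 0.
Proof. by rewrite frob2_ip ip0l. Qed.

Lemma norm2_sqr p q (A : 'M[R]_(p, q)) : norm2 A ^+ 2 = frob2 A.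
Proof. by rewrite /norm2 sqr_sqrtr // frob2_ge0. Qed.

Lemma norm2_ge0 p q (A : 'M[R]_(p, q)) : 0 <= norm2 A.
Proof. exact: sqrtr_ge0. Qed.

Lemma norm2_1 p q (A : 'M[R]_(p, q)) : norm2 A = 1 -> frob2 A = 1.
Proof. by move=> H; rewrite -norm2_sqr H expr1n. Qed.

Lemma frob2_1 p q (A : 'M[R]_(p, q)) : frob2 A = 1 -> norm2 A = 1.
Proof. by move=> H; rewrite /norm2 H sqrtr1. Qed.

Lemma CS p q (A B : 'M[R]_(p, q)) : ip A B <= norm2 A * norm2 B.
Proof.
set a := norm2 A; set b := norm2 B.
have a0 : 0 <= a by exact: norm2_ge0.
have b0 : 0 <= b by exact: norm2_ge0.
have Ha : frob2 A = a ^+ 2 by rewrite norm2_sqr.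
have Hb : frob2 B = b ^+ 2 by rewrite norm2_sqr.
have H := frob2_ge0 (b *: A + (- a) *: B).
rewrite frob2DZ frob2Z ipZl Ha Hb in H.
have [ab0|] := ltrP 0 (a * b).
  nra.
rewrite le_eqVlt => /orP [|]; last by move=> h; exfalso; nra.

rewrite mulf_eq0 => /orP [] /eqP h0.
  have -> : A = 0 by apply: frob2_eq0; rewrite Ha h0; ring.
  by rewrite ip0l h0 mul0r.
have -> : B = 0 by apply: frob2_eq0; rewrite Hb h0; ring.
by rewrite ipC ip0l h0 mulr0.
Qed.

Lemma frob2_cr m n (d : 'cV[R]_m) (x : 'rV[R]_n) : frob2 (d *m x) = frob2 d * frob2 x.
Proof.
rewrite /frob2 big_distrl /=; apply: eq_bigr => i _.
rewrite !big_ord1 big_distrr /=; apply: eq_bigr => j _.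
by rewrite mxE big_ord1; ring.
Qed.

Lemma trZ p q k (A : 'M[R]_(p, q)) : (k *: A)^T = k *: A^T.
Proof. by apply/matrixP => i j; rewrite !mxE. Qed.


Lemma ipDr p q (A B C : 'M[R]_(p, q)) : ip C (A + B) = ip C A + ip C B.
Proof. by rewrite ipC ipDl !(ipC C). Qed.

Lemma ipZr p q k (A B : 'M[R]_(p, q)) : ip B (k *: A) = k * ip B A.
Proof. by rewrite ipC ipZl ipC. Qed.

Lemma norm20 p q : norm2 (0 : 'M[R]_(p, q)) = 0.
Proof. by rewrite /norm2 frob20 sqrtr0. Qed.
End Alg.

Section Top.
Local Open Scope classical_set_scope.
Variable R : realType.

Lemma cont_sum (T : topologicalType) (I : Type) (r : seq I) (F : I -> T -> R) :
  (forall i, continuous (F i)) -> continuous (fun v => \sum_(i <- r) F i v).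
Proof.
move=> H; elim: r => [|a r IH].
  have -> : (fun v : T => \sum_(i <- [::]) F i v) = (fun=> 0) by apply: funext => v; rewrite big_nil.
  by move=> x; apply: cst_continuous.
have -> : (fun v => \sum_(i <- a :: r) F i v) = (fun v => F a v + \sum_(i <- r) F i v).
  by apply: funext => v; rewrite big_cons.
by move=> x; apply: cvgD; [apply: H| apply: IH].
Qed.

Lemma cont_mul (T : topologicalType) (f g : T -> R) :
  continuous f -> continuous g -> continuous (fun v => f v * g v).
Proof.
move=> Hf Hg.
have -> : (fun v => f v * g v) = f \* g by [].
by move=> x; apply: cvgM; [apply: Hf|apply: Hg].
Qed.

Lemma cont_frob2 (T : topologicalType) p q (f : T -> 'M[R]_(p, q)) :
  (forall i j, continuous (fun v => f v i j)) -> continuous (fun v => frob2 (f v)).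
Proof.
move=> H; rewrite /frob2; apply: cont_sum => i; apply: cont_sum => j.
have -> : (fun v => f v i j ^+ 2) = (fun v => f v i j) \* (fun v => f v i j).
  by apply: funext => v; rewrite expr2.
by move=> x; apply: cvgM; apply: H.
Qed.

Lemma cont_mulmx p q r (A : 'M[R]_(q, r)) i j :
  continuous (fun v : 'M[R]_(p, q) => (v *m A) i j).
Proof.
have -> : (fun v : 'M[R]_(p, q) => (v *m A) i j) = (fun v => \sum_k v i k * A k j).
  by apply: funext => v; rewrite mxE.
apply: cont_sum => k; apply: cont_mul; first exact: coord_continuous.
by move=> x; apply: cst_continuous.
Qed.

Lemma cont_id p q i j : continuous (fun v : 'M[R]_(p, q) => v i j).
Proof. exact: coord_continuous. Qed.

Lemma entry_le_frob2 p q (A : 'M[R]_(p, q)) i j : A i j ^+ 2 <= frob2 A.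
Proof.
rewrite /frob2 (bigD1 i) //= (bigD1 j (P:=xpredT)) //= -addrA lerDl.
apply: addr_ge0; apply: sumr_ge0 => *; [| apply: sumr_ge0 => *]; exact: sqr_ge0.
Qed.

Lemma sphere_max m n (Rm : 'M[R]_(m, n)) (d : 'rV[R]_m) : frob2 d = 1 ->
  exists2 c : 'rV[R]_m, frob2 c = 1 &
    forall v : 'rV[R]_m, frob2 v = 1 -> frob2 (v *m Rm) <= frob2 (c *m Rm).
Proof.
move=> d1.
pose S := [set v : 'rV[R]_m | frob2 v = 1].
have S0 : S !=set0 by exists d.
have cS : compact S.
  apply: bounded_closed_compact.
    exists 1; split => // k k1 v Sv.
    rewrite /= /Num.norm /= mx_normrE; apply: bigmax_le => [|[a b] _ /=].
      by apply: le_trans (ltW k1).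
    have := @entry_le_frob2 1 m v a b; rewrite Sv => h.
    rewrite ler_norml; apply/andP; split; nra.
  have := (continuous_closedP (fun v : 'rV[R]_m => frob2 v)).1 _ _ (@closed_eq R 1).
  apply. by apply: cont_frob2 => i j; apply: cont_id.
have cQ : {within S, continuous (fun v => frob2 (v *m Rm))}.
  apply: continuous_subspaceT.
  by apply: cont_frob2 => i j; apply: cont_mulmx.
have [c Sc Hc] := EVT_max_rV S0 cS cQ.
exists c; first by move: Sc; rewrite inE.
by move=> v Sv; apply: Hc; rewrite inE.
Qed.
End Top.

Lemma opnorm (R : realType) m n (Rm : 'M[R]_(m, n)) (sigma1 : R) :
  0 <= sigma1 -> (forall s, singular_value Rm s -> s <= sigma1) ->
  forall d : 'cV[R]_m, frob2 d = 1 -> frob2 (d^T *m Rm) <= sigma1 ^+ 2.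
Proof.
move=> s0 Hmax d d1.
have d1' : frob2 d^T = 1 by rewrite frob2_tr.
have [c c1 cmax] := sphere_max Rm d1'.
set M := frob2 (c *m Rm).
have M0 : 0 <= M := frob2_ge0 _.
have homog : forall v : 'rV[R]_m, frob2 (v *m Rm) <= M * frob2 v.
  move=> v; have [v0|vn0] := eqVneq (frob2 v) 0.
    by rewrite (frob2_eq0 v0) mul0mx !frob20 mulr0.
  have fv : 0 < frob2 v by rewrite lt_def vn0 frob2_ge0.
  set s := norm2 v.
  have s0' : 0 < s by rewrite /s /norm2 sqrtr_gt0.
  have ss : s ^+ 2 = frob2 v by rewrite norm2_sqr.
  have w1 : frob2 (s^-1 *: v) = 1.
    by rewrite frob2Z -ss exprVn mulVf // expf_neq0 // gt_eqF.
  have := cmax _ w1; rewrite -scalemxAl frob2Z => h.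
  have e : frob2 (v *m Rm) = s ^+ 2 * (s^-1 ^+ 2 * frob2 (v *m Rm)).
    by rewrite mulrA -exprMn mulfV ?gt_eqF // expr1n mul1r.
  rewrite e -ss [M * _]mulrC; apply: ler_wpM2l => //; exact: sqr_ge0.
have lag : forall e : 'rV[R]_m, ip (c *m Rm) (e *m Rm) = M * ip c e.
  move=> e.
  set al := ip (c *m Rm) (e *m Rm) - M * ip c e.
  set be := frob2 (e *m Rm) - M * frob2 e.
  have key : forall t, 2 * t * al + t ^+ 2 * be <= 0.
    move=> t; have := homog (c + t *: e).
    rewrite mulmxDl -scalemxAl !frob2DZ c1 -/M /al /be => h; lra.
  set eps := (`|be| + 1)^-1.
  have hb0 := normr_ge0 be.
  have hb1 := ler_norm be.
  have hb2 : - be <= `|be| by rewrite -normrN ler_norm.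
  have eps0 : 0 < eps by rewrite /eps invr_gt0; lra.
  have epsE : eps * (`|be| + 1) = 1 by rewrite mulVf // gt_eqF //; lra.
  have h := key (al * eps).
  have h2 : eps * al ^+ 2 * (2 + eps * be) <= 0.
    have -> : eps * al ^+ 2 * (2 + eps * be) = 2 * (al * eps) * al + (al * eps) ^+ 2 * be by ring.
    exact: h.
  have h3 : 1 <= 2 + eps * be.
    have hbb : 0 <= `|be| + be by lra.
    have hh := mulr_ge0 (ltW eps0) hbb; nra.
  have h4 : eps * al ^+ 2 <= 0.
    apply: le_trans h2; rewrite -{1}[eps * al ^+ 2]mulr1; apply: ler_wpM2l => //.
    by apply: mulr_ge0; [exact: ltW | exact: sqr_ge0].
  have h5 : al ^+ 2 <= 0 by rewrite -(pmulr_rle0 _ eps0).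
  have : al ^+ 2 = 0 by apply/eqP; rewrite eq_le h5 sqr_ge0.
  move/eqP; rewrite sqrf_eq0 /al subr_eq0 => /eqP h6; exact: h6.
have eig : c *m Rm *m Rm^T = M *: c.
  set E := c *m Rm *m Rm^T - M *: c.
  suff : E = 0 by move/eqP; rewrite subr_eq0 => /eqP.
  apply: frob2_eq0.
  have hE : ip E (c *m Rm *m Rm^T) = M * ip E c by rewrite -ip_mull ipC lag ipC.
  rewrite frob2_ip {2}/E -scaleNr ipDr ipZr hE; ring.
have Md : frob2 (d^T *m Rm) <= M by have := homog d^T; rewrite d1' mulr1.
suff : M <= sigma1 ^+ 2 by apply: le_trans.
have [M0'|Mpos] := eqVneq M 0; first by rewrite M0'; exact: sqr_ge0.
have Mp : 0 < M by rewrite lt_def Mpos M0.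
set s := Num.sqrt M.
have sp : 0 < s by rewrite sqrtr_gt0.
have ss : s ^+ 2 = M by rewrite sqr_sqrtr // ltW.
have eigT : Rm *m (Rm^T *m c^T) = M *: c^T.
  by rewrite -{1}(trmxK Rm) -!trmx_mul eig trZ.
have tr : singular_triple Rm s c^T (s^-1 *: (c *m Rm)^T).
  split; first exact: ltW.
  split; first by apply: frob2_1; rewrite frob2_tr.
  split.
    apply: frob2_1; rewrite frob2Z frob2_tr -/M -ss exprVn mulVf //.
    by rewrite expf_neq0 // gt_eqF.
  split.
    rewrite -scalemxAr trmx_mul eigT scalerA -ss; congr (_ *: _).
    by rewrite expr2 mulrA mulVf ?gt_eqF // mul1r.
  by rewrite scalerA mulfV ?gt_eqF // scale1r trmx_mul.
have hs : s <= sigma1 by apply: Hmax; exists c^T, (s^-1 *: (c *m Rm)^T).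
rewrite -ss; nra.
Qed.

Theorem proposition2 (R : realType) (m N : nat) (Rm : 'M[R]_(m, N)) (lam : R)
  (sigma1 : R) (u1 : 'cV[R]_m) (v1 : 'cV[R]_N) :
  0 <= lam ->
  singular_triple Rm sigma1 u1 v1 ->
  (forall s, singular_value Rm s -> s <= sigma1) ->
  (lam <= sigma1 -> is_minimizer Rm lam u1 ((sigma1 - lam) *: v1^T)) /\
  (sigma1 < lam -> forall d0 : 'cV[R]_m, norm2 d0 = 1 -> is_minimizer Rm lam d0 0).
Proof.
move=> lam0 [s0 [nu [nv [Rv RTu]]]] Hmax.
set F := frob2 Rm.
have op := opnorm s0 Hmax.
have objE : forall (d : 'cV[R]_m) (x : 'rV[R]_N), frob2 d = 1 ->
    obj Rm lam d x = (frob2 x - 2 * ip x (d^T *m Rm) + F) / 2 + lam * norm2 x.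
  move=> d x d1; rewrite /obj; congr (_ / 2 + _).
  rewrite -(scaleN1r Rm) frob2DZ frob2_cr d1 mul1r.
  have -> : ip (d *m x) Rm = ip x (d^T *m Rm).
    by rewrite -ip_tr trmx_mul ip_mull trmxK -(ip_tr x) trmx_mul trmxK.
  rewrite /F; ring.
have lower : forall (d : 'cV[R]_m) (x : 'rV[R]_N), norm2 d = 1 ->
    (norm2 x ^+ 2 - 2 * norm2 x * sigma1 + F) / 2 + lam * norm2 x <= obj Rm lam d x.
  move=> d x /norm2_1 d1; rewrite objE // -(norm2_sqr x).
  have hc := CS x (d^T *m Rm).
  have hw : norm2 (d^T *m Rm) <= sigma1.
    have := op d d1; rewrite -norm2_sqr => h.
    have := norm2_ge0 (d^T *m Rm); nra.
  have := norm2_ge0 x; have := norm2_ge0 (d^T *m Rm); nra.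
split.
  move=> ls; split; first exact: nu.
  move=> d' x' /(lower d' x') h; apply: le_trans h.
  rewrite objE; last exact: norm2_1.
  have nx : norm2 ((sigma1 - lam) *: v1^T) = sigma1 - lam.
    rewrite /norm2 frob2Z frob2_tr (norm2_1 nv) mulr1 sqrtr_sqr ger0_norm //.
    by rewrite subr_ge0.
  have ipx : ip ((sigma1 - lam) *: v1^T) (u1^T *m Rm) = (sigma1 - lam) * sigma1.
    rewrite ipZl -ip_tr trmxK trmx_mul trmxK RTu ipZr -frob2_ip (norm2_1 nv).
    by rewrite mulr1.
  rewrite -(norm2_sqr ((sigma1 - lam) *: v1^T)) nx ipx.
  have := norm2_ge0 x'; have := sqr_ge0 (norm2 x' - (sigma1 - lam)); nra.
move=> ls d0 nd0; split => // d' x' /(lower d' x') h; apply: le_trans h.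
rewrite objE; last exact: norm2_1.
rewrite frob20 ip0l norm20.
have := norm2_ge0 x'; nra.
Qed.
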